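(* Let $n\ge1$, $\lambda,R>0$ and $\alpha>1$. Let $\phi:[0,R]\to\mathbb{R}$ be a nonnegative solution of $$r^{1-n}(r^{n-1}\phi')'=\lambda\phi^\alpha\ \text{ in }(0,R),\qquad \phi(0)=1,\qquad\phi'(0)=0.$$ Then $\phi'>0$ in $(0,R)$ and, for every $k=1,2,\dots$, there exists $c_{n,k}>0$ depending only on $n$ and $k$ such that $\phi(r)\ge c_{n,k}\lambda^kr^{2k}$ for every $r\in(0,R)$. *)

(* Defs.v *)
From Stdlib Require Import Reals.
From Coquelicot Require Import Coquelicot.
Open Scope R_scope.

(* Real power x^a for x >= 0 and real a > 0, with the convention 0^a = 0
   (Stdlib's Rpower 0 a = exp (a * ln 0) = 1, which would be wrong). *)
Definition rpow (x a : R) : R := if Rle_dec x 0 then 0 else Rpower x a.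

(* Only the values of phi on [0,R] matter. *)
Definition radial_solution (n : nat) (lam alpha Rr : R) (phi : R -> R) : Prop :=
  (forall r, 0 <= r <= Rr -> 0 <= phi r) /\
  phi 0 = 1 /\
  filterlim (fun h => (phi h - phi 0) / h) (at_right 0) (locally 0) /\
  (forall r, 0 < r < Rr -> ex_derive phi r) /\
  (forall r, 0 < r < Rr ->
     is_derive (fun s => s ^ (n - 1) * Derive phi s) r
               (r ^ (n - 1) * (lam * rpow (phi r) alpha))).

(* Main.v *)
Require Import Defs.
From Stdlib Require Import Reals Lra Lia.
From Coquelicot Require Import Coquelicot.
Open Scope R_scope.
Definition rc (F : R -> R) := forall eps, 0 < eps -> exists d, 0 < d /\
  forall s, 0 < s < d -> Rabs (F s - F 0) < eps.

Lemma rc_ext F G : (forall x, F x = G x) -> rc F -> rc G.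
Proof. intros E H eps He. destruct (H eps He) as [d [Hd H2]]. exists d; split; auto.
intros s Hs. rewrite <- !E. auto. Qed.

Lemma rc_plus F G : rc F -> rc G -> rc (fun x => F x + G x).
Proof. intros H1 H2 eps He.
destruct (H1 (eps/2)) as [d1 [Hd1 K1]]; [lra|].
destruct (H2 (eps/2)) as [d2 [Hd2 K2]]; [lra|].
exists (Rmin d1 d2); split; [apply Rmin_pos; auto|].
intros s Hs. assert (A:=Rmin_l d1 d2). assert (B:=Rmin_r d1 d2).
specialize (K1 s ltac:(lra)). specialize (K2 s ltac:(lra)).
apply Rabs_def2 in K1. apply Rabs_def2 in K2. apply Rabs_def1; lra. Qed.

Lemma rc_derive F : ex_derive F 0 -> rc F.
Proof. intros H eps He. assert (C := ex_derive_continuous F 0 H).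
specialize (C _ (locally_ball (F 0) (mkposreal eps He))).
destruct C as [d Hd]. exists d; split; [apply cond_pos|].
intros s Hs. apply (Hd s). change (Rabs (s - 0) < d). rewrite Rminus_0_r, Rabs_pos_eq; lra. Qed.

Lemma rc_opp F : rc F -> rc (fun x => - F x).
Proof. intros H eps He. destruct (H eps He) as [d [Hd K]]. exists d; split; auto.
intros s Hs. replace (- F s - - F 0) with (- (F s - F 0)) by ring. rewrite Rabs_Ropp. auto. Qed.

Lemma rl F h C : 0 < h -> rc F -> (forall s, 0 < s < h -> F s <= C) -> F 0 <= C.
Proof. intros Hh H K. destruct (Rle_dec (F 0) C) as [|N]; auto. exfalso.
destruct (H (F 0 - C)) as [d [Hd K2]]; [lra|].
set (s := Rmin d h / 2). assert (A:=Rmin_l d h). assert (B:=Rmin_r d h).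
assert (P: 0 < Rmin d h) by (apply Rmin_pos; auto).
specialize (K s ltac:(unfold s; lra)). specialize (K2 s ltac:(unfold s; lra)).
apply Rabs_def2 in K2. lra. Qed.

Lemma mono_int F dF a b : (forall x, a <= x <= b -> is_derive F x (dF x)) ->
  (forall x, a <= x <= b -> 0 <= dF x) -> a <= b -> F a <= F b.
Proof. intros D P Hab. destruct (Req_dec a b) as [->|N]; [lra|].
destruct (MVT_cor2 F dF a b) as [c [E Hc]]; [lra| |].
- intros c Hc. apply is_derive_Reals. auto.
- assert (0 <= dF c) by (apply P; lra). nra. Qed.

Lemma mono_strict F dF a b : (forall x, a <= x <= b -> is_derive F x (dF x)) ->
  (forall x, a < x < b -> 0 < dF x) -> a < b -> F a < F b.
Proof. intros D P Hab.
destruct (MVT_cor2 F dF a b) as [c [E Hc]]; [lra| |].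
- intros c Hc. apply is_derive_Reals. auto.
- assert (0 < dF c) by (apply P; lra). nra. Qed.

Lemma mono0 F dF b : rc F -> (forall x, 0 < x < b -> is_derive F x (dF x)) ->
  (forall x, 0 < x < b -> 0 <= dF x) -> forall r, 0 < r < b -> F 0 <= F r.
Proof. intros H D P r Hr. apply (rl F r); [lra|auto|].
intros s Hs. apply (mono_int F dF); [intros; apply D; lra|intros; apply P; lra|lra]. Qed.

Lemma rpow_ge0 x a : 0 <= rpow x a.
Proof. unfold rpow. destruct (Rle_dec x 0); [lra|]. unfold Rpower. left; apply exp_pos. Qed.
Lemma rpow_gt0 x a : 0 < x -> 0 < rpow x a.
Proof. intros. unfold rpow. destruct (Rle_dec x 0); [lra|]. unfold Rpower. apply exp_pos. Qed.
Lemma rpow_ge x a : 1 <= x -> 1 < a -> x <= rpow x a.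
Proof. intros. unfold rpow. destruct (Rle_dec x 0); [lra|].
rewrite <- (Rpower_1 x) at 1 by lra. apply Rle_Rpower; lra. Qed.

Lemma Qlem (phi : R -> R) : filterlim (fun h => (phi h - phi 0) / h) (at_right 0) (locally 0) ->
  forall eps, 0 < eps -> exists d, 0 < d /\ forall s, 0 < s < d -> Rabs (phi s - phi 0) < eps * s.
Proof. intros H eps He. destruct (H _ (locally_ball 0 (mkposreal eps He))) as [d Hd].
exists d; split; [apply cond_pos|]. intros s Hs.
assert (B : ball 0 d s). { change (Rabs (s - 0) < d). rewrite Rminus_0_r, Rabs_pos_eq; lra. }
specialize (Hd s B ltac:(lra)). change (Rabs ((phi s - phi 0)/s - 0) < eps) in Hd.
rewrite Rminus_0_r in Hd. unfold Rdiv in Hd. rewrite Rabs_mult, Rabs_inv, (Rabs_pos_eq s) in Hd by lra.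
apply Rmult_lt_compat_r with (r := s) in Hd; [|lra].
rewrite Rmult_assoc, Rinv_l in Hd by lra. lra. Qed.

Lemma rc_phi (phi : R -> R) : filterlim (fun h => (phi h - phi 0) / h) (at_right 0) (locally 0) -> rc phi.
Proof. intros H eps He. destruct (Qlem phi H 1) as [d [Hd K]]; [lra|].
exists (Rmin d eps); split; [apply Rmin_pos; auto|].
intros s Hs. assert (A:=Rmin_l d eps). assert (B:=Rmin_r d eps).
specialize (K s ltac:(lra)). lra. Qed.

Lemma part1 n lam Rr alpha phi : 0 < lam -> 0 < Rr -> 1 < alpha -> radial_solution n lam alpha Rr phi ->
  forall r, 0 < r < Rr -> 0 < Derive phi r.
Proof.
intros Hl HR Ha [Hnn [H0 [Hq [Hd Hg]]]] r Hr.
set (g := fun s => s ^ (n - 1) * Derive phi s).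
set (dg := fun r => r ^ (n - 1) * (lam * rpow (phi r) alpha)).
assert (Dg : forall x, 0 < x < Rr -> is_derive g x (dg x)) by (intros; apply Hg; auto).
assert (Pg : forall x, 0 < x < Rr -> 0 <= dg x).
{ intros x Hx. unfold dg. apply Rmult_le_pos. apply pow_le; lra.
  apply Rmult_le_pos; [lra|apply rpow_ge0]. }
destruct (Rlt_dec 0 (Derive phi r)) as [|N]; auto. exfalso.
assert (gr : g r <= 0). { unfold g. assert (0 < r ^ (n-1)) by (apply pow_lt; lra). nra. }
destruct (Qlem phi Hq 1) as [d [Hdp K]]; [lra|].
set (m := Rmin r (Rmin d 1 / 2)).
assert (A1 := Rmin_l r (Rmin d 1 / 2)). assert (A2 := Rmin_r r (Rmin d 1 / 2)).
assert (A3 := Rmin_l d 1). assert (A4 := Rmin_r d 1).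
assert (A5 : 0 < Rmin d 1) by (apply Rmin_pos; lra).
assert (mpos : 0 < m) by (apply Rmin_pos; lra). fold m in A1, A2.
assert (gm : g m <= g r).
{ apply (mono_int g dg); [intros; apply Dg; lra|intros; apply Pg; lra|lra]. }
assert (gm2 : g (m/2) < g m).
{ apply (mono_strict g dg); [intros; apply Dg; lra| |lra].
  intros x Hx. unfold dg. apply Rmult_lt_0_compat. apply pow_lt; lra.
  apply Rmult_lt_0_compat; [lra|apply rpow_gt0].
  specialize (K x ltac:(lra)). rewrite H0 in K. apply Rabs_def2 in K. lra. }
set (c0 := - g (m/2)).
assert (c0pos : 0 < c0) by (unfold c0; lra).
assert (Dphi : forall s, 0 < s <= m/2 -> Derive phi s <= - c0).
{ intros s Hs. assert (gs : g s <= g (m/2)).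
  { destruct (Req_dec s (m/2)) as [->|]; [lra|].
    apply (mono_int g dg); [intros; apply Dg; lra|intros; apply Pg; lra|lra]. }
  assert (gs' : s^(n-1) * Derive phi s <= -c0) by (unfold c0; rewrite Ropp_involutive; exact gs).
  assert (0 < s ^ (n-1)) by (apply pow_lt; lra).
  assert (s ^ (n-1) <= 1) by (rewrite <- (pow1 (n-1)); apply pow_incr; lra).
  assert (Derive phi s < 0) by nra.
  assert (Derive phi s * (1 - s^(n-1)) <= 0) by (apply Rmult_le_0_r; lra).
  nra. }
set (F := fun x => - (phi x + c0 * x)).
assert (rcF : rc F).
{ apply rc_opp. apply rc_plus. apply rc_phi; auto. apply rc_derive. auto_derive. auto. }
assert (mF : forall s, 0 < s < m/2 -> F 0 <= F s).
{ apply (mono0 F (fun x => - (Derive phi x + c0)) (m/2) rcF).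
  - intros x Hx. unfold F. auto_derive. apply Hd; lra. rewrite Rmult_1_l, Rmult_1_r; reflexivity.
  - intros x Hx. assert (Derive phi x <= - c0) by (apply Dphi; lra). lra. }
destruct (Qlem phi Hq c0 c0pos) as [d2 [Hd2 K2]].
set (s := Rmin d2 (m/2) / 2).
assert (B1 := Rmin_l d2 (m/2)). assert (B2 := Rmin_r d2 (m/2)).
assert (B3 : 0 < Rmin d2 (m/2)) by (apply Rmin_pos; lra).
specialize (mF s ltac:(unfold s; lra)). specialize (K2 s ltac:(unfold s; lra)).
unfold F in mF. rewrite H0 in mF, K2. apply Rabs_def2 in K2. lra.
Qed.

Lemma phi_ge1 n lam Rr alpha phi : 0 < lam -> 0 < Rr -> 1 < alpha -> radial_solution n lam alpha Rr phi ->
  forall r, 0 < r < Rr -> 1 <= phi r.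
Proof. intros Hl HR Ha Hs r Hr. pose proof Hs as [Hnn [H0 [Hq [Hd Hg]]]].
rewrite <- H0. apply (mono0 phi (Derive phi) Rr); auto.
- apply rc_phi; auto.
- intros x Hx. apply Derive_correct. auto.
- intros x Hx. left. apply (part1 n lam Rr alpha phi); auto. Qed.

Lemma part2 n' k : exists c, 0 < c /\
  forall (lam Rr alpha : R) (phi : R -> R),
    0 < lam -> 0 < Rr -> 1 < alpha -> radial_solution (S n') lam alpha Rr phi ->
    forall r, 0 < r < Rr -> c * lam ^ k * r ^ (2 * k) <= phi r.
Proof.
induction k as [|k [c [Hc IH]]].
{ exists 1. split; [lra|]. intros lam Rr alpha phi Hl HR Ha Hs r Hr. simpl.
  rewrite !Rmult_1_r. apply (phi_ge1 (S n') lam Rr alpha phi); auto. }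
set (M := S (2 * k + n')).
assert (HM : 0 < INR M) by (apply lt_0_INR; unfold M; lia).
assert (HK : 0 < INR (2 * k + 2)) by (apply lt_0_INR; lia).
exists (c / (INR M * INR (2*k+2))). split.
{ apply Rdiv_lt_0_compat; [lra|]. apply Rmult_lt_0_compat; lra. }
intros lam Rr alpha phi Hl HR Ha Hs r Hr.
pose proof Hs as [Hnn [H0 [Hq [Hd Hg]]]].
replace (S n' - 1)%nat with n' in Hg by lia.
assert (ge1 := phi_ge1 (S n') lam Rr alpha phi Hl HR Ha Hs).
assert (dpos := part1 (S n') lam Rr alpha phi Hl HR Ha Hs).
set (C := c * lam ^ S k / INR M).
assert (StepA : forall t, 0 < t < Rr -> C * t ^ M <= t ^ n' * Derive phi t).
{ intros t Ht.
  set (H := fun s => s ^ n' * Derive phi s - C * s ^ M).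
  set (dH := fun s => s ^ n' * (lam * rpow (phi s) alpha) - C * (INR M * s ^ (2 * k + n'))).
  assert (DH : forall x, 0 < x < Rr -> is_derive H x (dH x)).
  { intros x Hx. unfold H, dH. apply (is_derive_minus (fun s => s ^ n' * Derive phi s) (fun s => C * s ^ M)).
    apply Hg; auto.
    replace (C * (INR M * x ^ (2 * k + n'))) with (C * (INR M * 1 * x ^ pred M)) by (rewrite Rmult_1_r; reflexivity).
    apply is_derive_scal. apply (is_derive_pow (fun t => t)). apply (is_derive_id (K := R_AbsRing)). }
  assert (PH : forall x, 0 < x < Rr -> 0 <= dH x).
  { intros x Hx. unfold dH, C.
    assert (1 <= phi x) by (apply ge1; auto).
    assert (E1 : phi x <= rpow (phi x) alpha) by (apply rpow_ge; lra).
    assert (E2 : c * lam ^ k * x ^ (2 * k) <= phi x) by (apply (IH lam Rr alpha phi); auto).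
    assert (0 < x ^ n') by (apply pow_lt; lra).
    replace (c * lam ^ S k / INR M * (INR M * x ^ (2 * k + n'))) with
      (x ^ n' * (lam * (c * lam ^ k * x ^ (2 * k)))) by (rewrite pow_add; change (lam ^ S k) with (lam * lam ^ k); field; lra).
    assert (x ^ n' * (lam * (c * lam ^ k * x ^ (2 * k))) <= x ^ n' * (lam * rpow (phi x) alpha)).
    { apply Rmult_le_compat_l; [lra|]. apply Rmult_le_compat_l; lra. }
    lra. }
  assert (K : forall s, 0 < s < t -> - (C * s ^ M) <= H t).
  { intros s Hs0. assert (H s <= H t).
    { apply (mono_int H dH); [intros; apply DH; lra|intros; apply PH; lra|lra]. }
    assert (0 < s ^ n' * Derive phi s).
    { apply Rmult_lt_0_compat; [apply pow_lt; lra|apply dpos; lra]. }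
    unfold H in *. lra. }
  assert (R0 : - (C * 0 ^ M) <= H t).
  { apply (rl (fun s => - (C * s ^ M)) t); [lra| |exact K].
    apply rc_derive. auto_derive. auto. }
  unfold M in R0. simpl in R0. unfold H in R0. fold M in R0. lra. }
assert (StepB : forall t, 0 < t < Rr -> C * t ^ (2 * k + 1) <= Derive phi t).
{ intros t Ht. specialize (StepA t Ht).
  replace (t ^ M) with (t ^ n' * t ^ (2 * k + 1)) in StepA
    by (rewrite <- pow_add; f_equal; unfold M; lia).
  assert (0 < t ^ n') by (apply pow_lt; lra).
  apply (Rmult_le_reg_l (t ^ n')); auto. lra. }
set (K := INR (2 * k + 2)).
set (G := fun s => phi s + - (C / K * s ^ (2 * k + 2))).
assert (rcG : rc G).
{ apply rc_plus. apply rc_phi; auto. apply rc_opp. apply rc_derive. auto_derive. auto. }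
assert (DG : forall x, 0 < x < Rr -> is_derive G x (Derive phi x + - (C / K * (INR (2 * k + 2) * 1 * x ^ pred (2 * k + 2))))).
{ intros x Hx.
  assert (D0 : is_derive (fun s => C / K * s ^ (2 * k + 2)) x (C / K * (INR (2 * k + 2) * 1 * x ^ pred (2 * k + 2))))
    by (apply is_derive_scal; apply (is_derive_pow (fun t => t)); apply (is_derive_id (K := R_AbsRing))).
  exact (is_derive_plus _ _ x _ _ (Derive_correct phi x (Hd x Hx)) (is_derive_opp _ x _ D0)). }
assert (PG : forall x, 0 < x < Rr -> 0 <= Derive phi x + - (C / K * (INR (2 * k + 2) * 1 * x ^ pred (2 * k + 2)))).
{ intros x Hx. replace (pred (2 * k + 2)) with (2 * k + 1)%nat by lia.
  specialize (StepB x Hx). fold K.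
  replace (C / K * (K * 1 * x ^ (2 * k + 1))) with (C * x ^ (2 * k + 1)) by (field; unfold K; lra).
  lra. }
assert (HG := mono0 G _ Rr rcG DG PG r Hr).
unfold G in HG. rewrite H0 in HG.
replace (0 ^ (2 * k + 2)) with 0 in HG by (rewrite Nat.add_comm; simpl; ring).
assert (0 <= phi r) by (apply Hnn; lra).
replace (2 * S k)%nat with (2 * k + 2)%nat by lia.
replace (c / (INR M * K) * lam ^ S k * r ^ (2 * k + 2)) with (C / K * r ^ (2 * k + 2))
  by (unfold C, K; field; lra).
lra.
Qed.

Theorem lemma4p6 (n : nat) (hn : (1 <= n)%nat) :
  (forall (lam Rr alpha : R) (phi : R -> R),
     0 < lam -> 0 < Rr -> 1 < alpha -> radial_solution n lam alpha Rr phi ->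
     forall r, 0 < r < Rr -> 0 < Derive phi r) /\
  (forall k : nat, (1 <= k)%nat ->
     exists c : R, 0 < c /\
       forall (lam Rr alpha : R) (phi : R -> R),
         0 < lam -> 0 < Rr -> 1 < alpha -> radial_solution n lam alpha Rr phi ->
         forall r, 0 < r < Rr -> c * lam ^ k * r ^ (2 * k) <= phi r).
Proof.
split.
- intros lam Rr alpha phi Hl HR Ha Hs. exact (part1 n lam Rr alpha phi Hl HR Ha Hs).
- intros k _. destruct n as [|n']; [lia|]. apply part2.
Qed.
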